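(* Let $A$ be a vector space with a bilinear operation $\circ:A\otimes A\to A$ which is commutative, i.e. $x\circ y=y\circ x$ for all $x,y\in A$. Then $(A,\circ)$ is an anti-pre-Lie algebra if and only if $(A,\circ)$ is associative.
   Context: All vector spaces are finite-dimensional over a field $\mathbb F$ of characteristic $0$. An anti-pre-Lie algebra is a vector space $A$ with a bilinear operation $\circ$ such that, writing $[x,y]=x\circ y-y\circ x$, for all $x,y,z\in A$: (i) $x\circ(y\circ z)-y\circ(x\circ z)=[y,x]\circ z$, and (ii) $[x,y]\circ z+[y,z]\circ x+[z,x]\circ y=0$. *)

(* Defs.v *)
From mathcomp Require Import all_boot all_order all_algebra.
Set Implicit Arguments. Unset Strict Implicit. Unset Printing Implicit Defensive.
Import GRing.Theory.
Local Open Scope ring_scope.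

Definition bilinear_op (F : fieldType) (V : lmodType F) (m : V -> V -> V) : Prop :=
  (forall (a : F) (x y z : V), m (a *: x + y) z = a *: m x z + m y z) /\
  (forall (a : F) (x y z : V), m z (a *: x + y) = a *: m z x + m z y).

Definition commutator_op (V : zmodType) (m : V -> V -> V) (x y : V) : V :=
  m x y - m y x.

Definition anti_pre_Lie (V : zmodType) (m : V -> V -> V) : Prop :=
  (forall x y z : V,
      m x (m y z) - m y (m x z) = m (commutator_op m y x) z) /\
  (forall x y z : V,
      m (commutator_op m x y) z + m (commutator_op m y z) x
        + m (commutator_op m z x) y = 0).

Definition commutative_op (V : Type) (m : V -> V -> V) : Prop :=
  forall x y : V, m x y = m y x.

Definition associative_op (V : Type) (m : V -> V -> V) : Prop :=
  forall x y z : V, m (m x y) z = m x (m y z).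

(* Main.v *)
Require Import Defs.
From mathcomp Require Import all_boot all_order all_algebra.
Local Open Scope ring_scope.
Import GRing.Theory.

Theorem proposition2p6 (F : fieldType) (V : vectType F)
  (charF0 : [pchar F] =i pred0)
  (m : V -> V -> V) (hbil : bilinear_op m) (hcomm : commutative_op m) :
  anti_pre_Lie m <-> associative_op m.
Proof.
have m0 : forall z, m 0 z = 0.
  move=> z; have h := (proj1 hbil) 1 0 0 z.
  rewrite !scale1r addr0 in h; apply: (addrI (m 0 z)); by rewrite addr0 -h.
have c0 : forall x y, commutator_op m x y = 0.
  by move=> x y; rewrite /commutator_op (hcomm x y) subrr.
split.
- case=> h1 _ x y z.
  have e : forall a b c, m a (m b c) = m b (m a c).
    move=> a b c; apply/eqP; rewrite -subr_eq0; apply/eqP.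
    by rewrite h1 c0 m0.
  by rewrite hcomm e (hcomm z y).
- move=> ha; split.
  + move=> x y z; rewrite c0 m0; apply/eqP; rewrite subr_eq0; apply/eqP.
    by rewrite -!ha (hcomm x y).
  + by move=> x y z; rewrite !c0 !m0 !addr0.
Qed.
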